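(* Let integers $n \geq 0$, $m \geq 1$ and $k \geq 1$ be given, and let $p=(p_1,\dots,p_m)$ be a probability distribution on $\{1,\dots,m\}$. Throw $n$ balls independently into $m$ bins, each ball landing in bin $i$ with probability $p_i$, and let $M_n$ be the maximum load of any bin after the $n$ balls are thrown. Then \[ \Pr[\mathrm{Bin}(n, \|p\|_k) \geq k] \;\leq\; \Pr[M_n \geq k] \;\leq\; \binom{n}{k}\|p\|_k^{k}, \] where $\|p\|_k = \left(\sum_{i=1}^m p_i^k\right)^{1/k}$.
   Context: $\mathrm{Bin}(n,\alpha)$ denotes a binomial random variable with $n$ trials and success probability $\alpha$. The load of a bin is the number of balls that landed in it. *)

(* Defs.v *)
From HB Require Import structures.
From mathcomp Require Import all_boot all_order all_algebra.
From mathcomp Require Import reals exp.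
Set Implicit Arguments. Unset Strict Implicit. Unset Printing Implicit Defensive.
Import Order.TTheory GRing.Theory Num.Theory.
Local Open Scope ring_scope.

(* Discrete model: an outcome of throwing n balls into m bins is a function
   f : 'I_n -> 'I_m (ball j lands in bin f j); balls are independent, so
   outcome f has probability prod_j p (f j). *)

Definition load (n m : nat) (f : {ffun 'I_n -> 'I_m}) (i : 'I_m) : nat :=
  #|[set j | f j == i]|.

Definition maxload (n m : nat) (f : {ffun 'I_n -> 'I_m}) : nat :=
  (\max_(i < m) load f i)%N.

Definition outcome_prob (R : realType) (n m : nat) (p : 'I_m -> R)
  (f : {ffun 'I_n -> 'I_m}) : R := \prod_(j < n) p (f j).

Definition prob_maxload_ge (R : realType) (n m : nat) (p : 'I_m -> R) (k : nat) : R :=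
  \sum_(f : {ffun 'I_n -> 'I_m} | (k <= maxload f)%N) outcome_prob p f.

Definition binom_tail_ge (R : realType) (n : nat) (a : R) (k : nat) : R :=
  \sum_(k <= j < n.+1) ('C(n, j))%:R * a ^+ j * (1 - a) ^+ (n - j).

Definition knorm (R : realType) (m : nat) (p : 'I_m -> R) (k : nat) : R :=
  powR (\sum_(i < m) p i ^+ k) (k%:R)^-1.

(* Main.v *)
Require Import Defs.
From HB Require Import structures.
From mathcomp Require Import all_boot all_order all_algebra.
From mathcomp Require Import reals exp.
From mathcomp Require Import zify ring lra.
Import Order.TTheory GRing.Theory Num.Theory.
Local Open Scope ring_scope.
Section Core.
Variable R : realType.

Definition bt (t j : nat) (v w : R) := ('C(t, j))%:R * v ^+ j * w ^+ (t - j).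
Definition Ah (k t : nat) (v w : R) := \sum_(j < k) bt t j v w.

Lemma bt_out t j v w : (t < j)%N -> bt t j v w = 0.
Proof. by move=> h; rewrite /bt bin_small // mul0r mul0r. Qed.

Lemma sum_bt t v w : (v + w) ^+ t = \sum_(j < t.+1) bt t j v w.
Proof.
rewrite addrC exprDn; apply: eq_bigr => j _.
by rewrite /bt -mulr_natl; ring.
Qed.

Lemma Ah0 k v w : (0 < k)%N -> Ah k 0 v w = 1.
Proof.
case: k => // k' _; rewrite /Ah big_ord_recl big1.
  by rewrite /bt bin0 !expr0 !mulr1 addr0.
by move=> j _; rewrite bt_out.
Qed.

Lemma bt_rec t j v w : bt t.+1 j.+1 v w = w * bt t j.+1 v w + v * bt t j v w.
Proof.
rewrite /bt binS natrD.
case: (ltnP t j.+1) => hj.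
  rewrite (bin_small hj).
  have -> : (t.+1 - j.+1 = t - j)%N by lia.
  by rewrite exprS; ring.
have -> : (t.+1 - j.+1 = t - j)%N by lia.
have -> : (t - j = (t - j.+1).+1)%N by lia.
by rewrite !exprS; ring.
Qed.

Lemma Ah_rec k t v w : (0 < k)%N ->
  Ah k t.+1 v w = (v + w) * Ah k t v w - ('C(t, k.-1))%:R * v ^+ k * w ^+ (t.+1 - k).
Proof.
case: k => // k' _ /=; rewrite /Ah.
have E1 : \sum_(j < k'.+1) bt t.+1 j v w = w ^+ t.+1 +
   w * \sum_(j < k') bt t j.+1 v w + v * \sum_(j < k') bt t j v w.
  rewrite big_ord_recl /= !mulr_sumr -addrA -big_split /=.
  congr (_ + _); first by rewrite /bt bin0 expr0 subn0 !mul1r.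
  by apply: eq_bigr => j _; rewrite bt_rec.
have E2 : \sum_(j < k'.+1) bt t j v w = w ^+ t + \sum_(j < k') bt t j.+1 v w.
  by rewrite big_ord_recl /bt bin0 expr0 subn0 !mul1r.
have E3 : \sum_(j < k'.+1) bt t j v w = \sum_(j < k') bt t j v w + bt t k' v w.
  by rewrite big_ord_recr.
have E4 : v * bt t k' v w = ('C(t, k'))%:R * v ^+ k'.+1 * w ^+ (t.+1 - k'.+1).
  by rewrite /bt subSS exprS; ring.
rewrite E1 -E4.
have -> : (v + w) * \sum_(j < k'.+1) bt t j v w =
   w * \sum_(j < k'.+1) bt t j v w + v * \sum_(j < k'.+1) bt t j v w by ring.
rewrite {1}E2 E3 exprS; ring.
Qed.

Fixpoint Hf (k : nat) (s w : R) (t : nat) : R :=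
  match t with
  | 0 => 0
  | t'.+1 => s * Hf k s w t' + ('C(t', k.-1))%:R * w ^+ (t'.+1 - k)
  end.

Lemma B_H k t v w : (0 < k)%N ->
  (v + w) ^+ t - Ah k t v w = v ^+ k * Hf k (v + w) w t.
Proof.
move=> k1; elim: t => [|t IH]; first by rewrite Ah0 // expr0 subrr mulr0.
rewrite Ah_rec // /=.
have -> : (v + w) ^+ t.+1 = (v + w) * (v + w) ^+ t by rewrite exprS.
have -> : (v + w) ^+ t = v ^+ k * Hf k (v + w) w t + Ah k t v w by rewrite -IH; ring.
ring.
Qed.

Lemma Hf_ge0 k s w t : 0 <= s -> 0 <= w -> 0 <= Hf k s w t.
Proof.
move=> hs hw; elim: t => [|t IH] //=.
by apply: addr_ge0; [apply: mulr_ge0|apply: mulr_ge0; [apply: ler0n| apply: exprn_ge0]].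
Qed.

Lemma Hf_mono k s d y t : 0 <= s -> 0 <= d -> d <= y -> Hf k s d t <= Hf k s y t.
Proof.
move=> hs hd hy; elim: t => [|t IH] //=.
apply: lerD; first by apply: ler_wpM2l.
apply: ler_wpM2l; first by apply: ler0n.
by apply: lerXn2r => //; rewrite ?inE ?nnegrE //; apply: le_trans hy.
Qed.

End Core.
Arguments bt {R}. Arguments Ah {R}. Arguments Hf {R}.
Section Core2.
Variable R : realType.

Lemma sum_range k t (F : nat -> R) : (forall j, (t < j)%N -> F j = 0) ->
  \sum_(j < k) F j = \sum_(j < t.+1 | (j < k)%N) F j.
Proof.
move=> hF; rewrite -(big_mkord xpredT) -(big_mkord (fun j => (j < k)%N)).
case: (leqP k t.+1) => hk.
  by rewrite (big_nat_widen _ _ _ _ _ hk).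
rewrite (big_nat_widen 0 t.+1 k _ _ (ltnW hk)) (bigID (fun j => (j < t.+1)%N)) /=.
rewrite [X in _ + X]big1 ?addr0; last by move=> j h; apply: hF; move: h; lia.
rewrite big_nat_cond [RHS]big_nat_cond; apply: eq_bigl => j; apply/idP/idP; lia.
Qed.

Lemma bt_ge0 t j (v w : R) : 0 <= v -> 0 <= w -> 0 <= bt t j v w.
Proof. by move=> hv hw; rewrite /bt !mulr_ge0 // ?ler0n // exprn_ge0. Qed.

Lemma Ah_sum k t (v w : R) : Ah k t v w = \sum_(j < t.+1 | (j < k)%N) bt t j v w.
Proof. by rewrite /Ah (sum_range k t (fun j => bt t j v w)) // => j; apply: bt_out. Qed.

Lemma tail_ineq k t (x y c : R) : (0 < k)%N -> 0 <= x -> 0 <= y ->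
  c ^+ k = x ^+ k + y ^+ k -> x <= c -> y <= c -> c <= x + y ->
  \sum_(j < t.+1 | (j < k)%N && (t - j < k)%N) bt t j x y <= Ah k t c (x + y - c).
Proof.
move=> k1 hx hy hc hxc hyc hcs.
have hd : 0 <= x + y - c by rewrite subr_ge0.
have hc0 : 0 <= c by apply: le_trans hxc.
case: (leqP (k + k) t.+1) => ht.
  rewrite big1; last by move=> j /andP [h1 h2]; have := ltn_ord j; lia.
  by rewrite /Ah; apply: sumr_ge0 => j _; apply: bt_ge0.
have Ea : \sum_(j < t.+1 | (j < k)%N) bt t j x y =
   \sum_(j < t.+1 | (j < k)%N && (t - j < k)%N) bt t j x y +
   \sum_(j < t.+1 | (k <= t - j)%N) bt t j x y.
  rewrite (bigID (fun j : 'I_t.+1 => (t - j < k)%N)) /=; congr (_ + _).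
  by apply: eq_bigl => j; have hj := ltn_ord j; apply/idP/idP; lia.
have Ec : \sum_(j < t.+1 | (k <= t - j)%N) bt t j x y =
          \sum_(j < t.+1 | (k <= j)%N) bt t j y x.
  rewrite (reindex_inj rev_ord_inj) /=; apply: eq_big => j.
    by rewrite subSS; have hj := ltn_ord j; apply/idP/idP; lia.
  move=> _; rewrite /bt subSS; have hj := ltn_ord j.
  rewrite bin_sub; last by lia.
  have -> : (t - (t - j) = j)%N by lia.
  by ring.
have Ed : (y + x) ^+ t = Ah k t y x + \sum_(j < t.+1 | (k <= j)%N) bt t j y x.
  rewrite sum_bt Ah_sum (bigID (fun j : 'I_t.+1 => (j < k)%N)) /=; congr (_ + _).
  by apply: eq_bigl => j; rewrite -leqNgt.
have B1 := @B_H R k t x y k1.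
have B2 := @B_H R k t y x k1.
have B3 := @B_H R k t c (x + y - c) k1.
have E1 : c + (x + y - c) = x + y by ring.
have E2 : y + x = x + y by ring.
rewrite E1 in B3; rewrite E2 in B2 Ed.
have H1 : Hf k (x + y) (x + y - c) t <= Hf k (x + y) y t.
  by apply: Hf_mono => //; [apply: addr_ge0|lra].
have H2 : Hf k (x + y) (x + y - c) t <= Hf k (x + y) x t.
  by apply: Hf_mono => //; [apply: addr_ge0|lra].
have G : c ^+ k * Hf k (x + y) (x + y - c) t <=
   x ^+ k * Hf k (x + y) y t + y ^+ k * Hf k (x + y) x t.
  rewrite hc mulrDl; apply: lerD; apply: ler_wpM2l => //; apply: exprn_ge0 => //.
rewrite -Ah_sum in Ea.
lra.
Qed.
End Core2.
Section Poly.
Variable R : realType.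

Definition Ek (r : nat) (x : R) : {poly R} := \poly_(j < r) (x ^+ j / (j`!)%:R).

Lemma fact_neq0 n : (n`!)%:R != 0 :> R.
Proof. by rewrite pnatr_eq0 -lt0n fact_gt0. Qed.

Lemma coef_EE r r' x y t : (t`!)%:R * (Ek r x * Ek r' y)`_t =
  \sum_(j < t.+1 | (j < r)%N && (t - j < r')%N) bt t j x y.
Proof.
rewrite coefM mulr_sumr [RHS]big_mkcond /=; apply: eq_bigr => j _.
rewrite !coef_poly; have hj := ltn_ord j.
case: (j < r)%N; case: (t - j < r')%N; rewrite /= ?mul0r ?mulr0 //.
have hf : (t`!)%:R = ('C(t, j))%:R * (j`!)%:R * ((t - j)`!)%:R :> R.
  by rewrite -!natrM -mulnA bin_fact.
rewrite hf /bt; field.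
by rewrite !fact_neq0.
Qed.

Lemma merge_coef k N t x y c : (0 < k)%N -> (t <= N)%N -> 0 <= x -> 0 <= y ->
  c ^+ k = x ^+ k + y ^+ k -> x <= c -> y <= c -> c <= x + y ->
  (Ek k x * Ek k y)`_t <= (Ek k c * Ek N.+1 (x + y - c))`_t.
Proof.
move=> k1 tN hx hy hc hxc hyc hcs.
have ht : 0 < (t`!)%:R :> R by rewrite ltr0n fact_gt0.
rewrite -(ler_pM2l ht) !coef_EE.
have -> : \sum_(j < t.+1 | (j < k)%N && (t - j < N.+1)%N) bt t j c (x + y - c)
   = Ah k t c (x + y - c).
  rewrite Ah_sum; apply: eq_bigl => j; apply/idP/idP; lia.
exact: tail_ineq.
Qed.

Lemma exp_add N t u v : (t <= N)%N ->
  (Ek N.+1 u * Ek N.+1 v)`_t = (Ek N.+1 (u + v))`_t.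
Proof.
move=> tN; apply: (mulfI (fact_neq0 t)); rewrite coef_EE coef_poly.
have -> : (t < N.+1)%N by lia.
rewrite mulrC divfK ?fact_neq0 // sum_bt big_mkcond /=; apply: eq_bigr => j _.
have hj := ltn_ord j.
have -> : (j < N.+1)%N && (t - j < N.+1)%N by apply/andP; split; lia.
done.
Qed.

Definition leN N (P Q : {poly R}) := forall t, (t <= N)%N -> P`_t <= Q`_t.
Definition nng (P : {poly R}) := forall t, 0 <= P`_t.

Lemma leN_refl N P : leN N P P.
Proof. by []. Qed.

Lemma leN_trans N P Q S : leN N P Q -> leN N Q S -> leN N P S.
Proof. by move=> h1 h2 t ht; apply: le_trans (h1 t ht) (h2 t ht). Qed.

Lemma leN_mul N P P' Q Q' : nng P -> nng Q -> leN N P P' -> leN N Q Q' ->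
  leN N (P * Q) (P' * Q').
Proof.
move=> hP hQ h1 h2 t ht; rewrite !coefM; apply: ler_sum => j _.
have hj := ltn_ord j.
by apply: ler_pM => //; [apply: h1|apply: h2]; lia.
Qed.

Lemma nng_mul P Q : nng P -> nng Q -> nng (P * Q).
Proof. by move=> hP hQ t; rewrite coefM; apply: sumr_ge0 => j _; apply: mulr_ge0. Qed.

Lemma nng_Ek r x : 0 <= x -> nng (Ek r x).
Proof.
move=> hx t; rewrite coef_poly; case: ifP => // _.
by apply: divr_ge0; [apply: exprn_ge0|apply: ler0n].
Qed.

Lemma nng_prod m (F : 'I_m -> {poly R}) : (forall i, nng (F i)) -> nng (\prod_(i < m) F i).
Proof.
move=> hF; elim/big_ind: _ => //; last by move=> *; apply: nng_mul.
by move=> t; rewrite coef1; case: (t == 0)%N.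
Qed.

Lemma Ek0 r : (0 < r)%N -> Ek r 0 = 1.
Proof.
move=> hr; apply/polyP => j; rewrite coef_poly coef1.
case: j => [|j]; first by rewrite hr expr0 fact0 divr1.
by rewrite expr0n /= mul0r; case: ifP.
Qed.

End Poly.
Arguments Ek {R}. Arguments leN {R}. Arguments nng {R}.
Section Chain.
Variable R : realType.

Lemma root_pow k (z : R) : (0 < k)%N -> 0 <= z -> (powR z (k%:R)^-1) ^+ k = z.
Proof.
move=> k1 hz; rewrite -powR_mulrn ?powR_ge0 // -powRrM mulVf ?powRr1 //.
by rewrite pnatr_eq0 -lt0n.
Qed.

Lemma pow_root k (c : R) : (0 < k)%N -> 0 <= c -> powR (c ^+ k) (k%:R)^-1 = c.
Proof.
move=> k1 hc; rewrite -powR_mulrn // -powRrM mulfV ?powRr1 //.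
by rewrite pnatr_eq0 -lt0n.
Qed.

Lemma pow_le k (a b : R) : (0 < k)%N -> 0 <= a -> 0 <= b -> a ^+ k <= b ^+ k -> a <= b.
Proof. by move=> k1 ha hb; rewrite (ler_pXn2r k1) // nnegrE. Qed.

Lemma powD_ge k (x y : R) : (0 < k)%N -> 0 <= x -> 0 <= y -> x ^+ k + y ^+ k <= (x + y) ^+ k.
Proof.
case: k => // k _ hx hy; elim: k => [|k IH]; first by rewrite !expr1.
rewrite (exprS x) (exprS y) (exprS (x + y)).
have hX := exprn_ge0 k.+1 hx; have hY := exprn_ge0 k.+1 hy.
have h1 : 0 <= x * y ^+ k.+1 by apply: mulr_ge0.
have h2 : 0 <= y * x ^+ k.+1 by apply: mulr_ge0.
have h3 : (x + y) * (x ^+ k.+1 + y ^+ k.+1) <= (x + y) * (x + y) ^+ k.+1.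
  by apply: ler_wpM2l => //; apply: addr_ge0.
nra.
Qed.

Lemma chain k N m (p : 'I_m -> R) : (0 < k)%N -> (forall i, 0 <= p i) ->
  exists c, [/\ 0 <= c, c ^+ k = \sum_(i < m) p i ^+ k, c <= \sum_(i < m) p i &
    leN N (\prod_(i < m) Ek k (p i)) (Ek k c * Ek N.+1 (\sum_(i < m) p i - c))].
Proof.
move=> k1; elim: m p => [|m IH] p hp.
  exists 0; split => //; rewrite ?big_ord0 ?expr0n //=; first by case: k k1.
  by rewrite subrr !Ek0 // mulr1.
have [c [hc0 hck hcs hle]] := IH (fun i => p (widen_ord (leqnSn m) i)) (fun i => hp _).
set s := \sum_(i < m) p (widen_ord (leqnSn m) i) in hcs hle.
set y := p ord_max.
have hy : 0 <= y by apply: hp.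
set c' := powR (c ^+ k + y ^+ k) (k%:R)^-1.
have hc'0 : 0 <= c' by apply: powR_ge0.
have hc'k : c' ^+ k = c ^+ k + y ^+ k.
  by apply: root_pow => //; apply: addr_ge0; apply: exprn_ge0.
have hcc : c <= c'.
  by apply: (@pow_le k) => //; rewrite hc'k lerDl exprn_ge0.
have hyc : y <= c'.
  by apply: (@pow_le k) => //; rewrite hc'k lerDr exprn_ge0.
have hcy : c' <= c + y.
  by apply: (@pow_le k) => //; [apply: addr_ge0|rewrite hc'k; apply: powD_ge].
have hs0 : 0 <= s - c by rewrite subr_ge0.
have hd0 : 0 <= c + y - c' by rewrite subr_ge0.
exists c'; split => //.
- by rewrite big_ord_recr /= hc'k hck.
- by rewrite big_ord_recr /=; apply: le_trans hcy _; apply: lerD.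
rewrite big_ord_recr big_ord_recr /= -/s -/y.
apply: (@leN_trans _ _ _ ((Ek k c * Ek N.+1 (s - c)) * Ek k y)).
  apply: leN_mul => //; first by apply: nng_prod => i; apply: nng_Ek.
  by apply: nng_Ek.
rewrite mulrAC.
apply: (@leN_trans _ _ _ ((Ek k c' * Ek N.+1 (c + y - c')) * Ek N.+1 (s - c))).
  apply: leN_mul => //; first by apply: nng_mul; apply: nng_Ek.
  - by apply: nng_Ek.
  - by move=> t ht; apply: merge_coef.
rewrite -mulrA.
apply: leN_mul => //; first by apply: nng_Ek.
- by apply: nng_mul; apply: nng_Ek.
move=> t ht; rewrite exp_add //.
have -> : c + y - c' + (s - c) = s + y - c' by ring.
done.
Qed.
End Chain.
Section Balls.
Variable R : realType.
Variable m : nat.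
Variable p : 'I_m -> R.

Definition Fb n (r : 'I_m -> nat) : R :=
  \sum_(f : {ffun 'I_n -> 'I_m} | [forall i, (load f i < r i)%N]) \prod_(j < n) p (f j).
Definition Pr (r : 'I_m -> nat) : {poly R} := \prod_(i < m) Ek (r i) (p i).
Definition dec (r : 'I_m -> nat) (i : 'I_m) : 'I_m -> nat :=
  fun i' => if i' == i then (r i).-1 else r i'.

Lemma deriv_Ek r (x : R) : (Ek r x)^`() = x *: Ek r.-1 x.
Proof.
apply/polyP => j; rewrite coef_deriv coefZ !coef_poly.
case: r => [|r] //=; first by rewrite mul0rn mulr0.
have -> : (j.+1 < r.+1)%N = (j < r)%N by [].
case: ifP => _; last by rewrite mul0rn mulr0.
rewrite factS natrM -mulr_natr exprS; field.
by rewrite fact_neq0 nat1r pnatr_eq0.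
Qed.

Lemma deriv_prod_seq (s : seq 'I_m) (Q : 'I_m -> {poly R}) : uniq s ->
  (\prod_(i <- s) Q i)^`() =
  \sum_(i <- s) \prod_(j <- s) (if j == i then (Q j)^`() else Q j).
Proof.
elim: s => [|a s IH] /=; first by rewrite !big_nil -polyC1 derivC.
move=> /andP [ha hs]; rewrite !big_cons derivM IH // eqxx.
congr (_ + _).
  congr (_ * _); apply: eq_big_seq => j hj.
  have -> : (j == a) = false by apply/negbTE; apply: contraNneq ha => <-.
done.
rewrite mulr_sumr; apply: eq_big_seq => i hi.
rewrite big_cons.
have -> : (a == i) = false by apply/negbTE; apply: contraNneq ha => ->.
done.
Qed.

Lemma deriv_Pr r : (Pr r)^`() = \sum_(i < m) p i *: Pr (dec r i).
Proof.
rewrite /Pr deriv_prod_seq ?index_enum_uniq //; apply: eq_bigr => i _.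
rewrite (bigD1 i) //= eqxx deriv_Ek [in RHS](bigD1 i) //= /dec eqxx -scalerAl.
congr (_ *: (_ * _)); apply: eq_bigr => j /negbTE ->; done.
Qed.

Lemma coef_PrS n r : ((n.+1)`!)%:R * (Pr r)`_n.+1 =
  \sum_(i < m) p i * ((n`!)%:R * (Pr (dec r i))`_n).
Proof.
have -> : ((n.+1)`!)%:R * (Pr r)`_n.+1 = (n`!)%:R * (Pr r)^`()`_n.
  by rewrite coef_deriv factS natrM -mulr_natr; ring.
rewrite deriv_Pr coef_sum mulr_sumr; apply: eq_bigr => i _.
by rewrite coefZ; ring.
Qed.

Lemma Fb0 r : Fb 0 r = (Pr r)`_0.
Proof.
have hl : forall (f : {ffun 'I_0 -> 'I_m}) i, load f i = 0%N.
  move=> f i; apply/eqP; rewrite -leqn0 /load.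
  by apply: leq_trans (max_card _) _; rewrite card_ord.
have -> : (Pr r)`_0 = \prod_(i < m) (Ek (r i) (p i))`_0.
  rewrite /Pr; apply: (big_morph (fun P : {poly R} => P`_0)).
    by move=> P Q; rewrite coef0M.
  by rewrite coef1.
have hc : forall f : {ffun 'I_0 -> 'I_m},
    [forall i, (load f i < r i)%N] = [forall i, (0 < r i)%N].
  by move=> f; apply: eq_forallb => i; rewrite hl.
rewrite /Fb; under eq_bigl => f do rewrite hc.
case: (boolP [forall i, (0 < r i)%N]) => hr.
  rewrite [RHS]big1; last first.
    by move=> i _; rewrite /Ek coef_poly (forallP hr i) expr0 fact0 divr1.
  rewrite (eq_bigr (fun _ => 1)); last by move=> f _; rewrite big_ord0.
  by rewrite sumr_const card_ffun !card_ord expn0.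
rewrite big_pred0 //; move/forallPn: hr => [i hi].
rewrite (bigD1 i) //= /Ek coef_poly (negbTE hi) mul0r //.
Qed.

Definition fcons n (i : 'I_m) (g : {ffun 'I_n -> 'I_m}) : {ffun 'I_n.+1 -> 'I_m} :=
  [ffun j => if unlift ord0 j is Some j' then g j' else i].
Definition ftail n (f : {ffun 'I_n.+1 -> 'I_m}) : {ffun 'I_n -> 'I_m} :=
  [ffun j => f (lift ord0 j)].

Lemma fcons0 n i g : @fcons n i g ord0 = i.
Proof. by rewrite ffunE unlift_none. Qed.
Lemma fconsS n i g j : @fcons n i g (lift ord0 j) = g j.
Proof. by rewrite ffunE liftK. Qed.

Lemma load_fcons n i g i' : load (@fcons n i g) i' = (load g i' + (i == i'))%N.
Proof.
rewrite /load -!sum1dep_card big_mkcond [in RHS]big_mkcond /= big_ord_recl fcons0.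
by rewrite addnC; congr (_ + _)%N; apply: eq_bigr => j _; rewrite fconsS.
Qed.

Lemma FbS n r : Fb n.+1 r = \sum_(i < m) p i * Fb n (dec r i).
Proof.
rewrite /Fb (reindex (fun ig : 'I_m * {ffun 'I_n -> 'I_m} => @fcons n ig.1 ig.2)) /=; last first.
  apply: onW_bij; exists (fun f : {ffun 'I_n.+1 -> 'I_m} => (f ord0, @ftail n f)).
    by move=> [i g]; rewrite fcons0 /=; congr (_, _); apply/ffunP => j; rewrite ffunE fconsS.
  move=> f; apply/ffunP => j; rewrite ffunE /=.
  by case: unliftP => [j' ->|->] //; rewrite ffunE.
have Hc : forall i g, [forall i', (load (@fcons n i g) i' < r i')%N] =
   [forall i', (load g i' < dec r i i')%N].
  move=> i g; apply: eq_forallb => i'; rewrite load_fcons /dec eq_sym.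
  by case: eqP => [->|_] /=; apply/idP/idP; lia.
under eq_bigl => ig do rewrite Hc.
rewrite -(pair_big_dep xpredT (fun i g => [forall i', (load g i' < dec r i i')%N])
   (fun i g => \prod_(j < n.+1) p (@fcons n i g j))) /=.
apply: eq_bigr => i _; rewrite mulr_sumr; apply: eq_bigr => g _.
rewrite big_ord_recl fcons0; congr (_ * _); apply: eq_bigr => j _.
by rewrite fconsS.
Qed.

Lemma Fb_coef n r : Fb n r = (n`!)%:R * (Pr r)`_n.
Proof.
elim: n r => [|n IH] r; first by rewrite Fb0 fact0 mul1r.
rewrite FbS coef_PrS; apply: eq_bigr => i _; by rewrite IH.
Qed.

End Balls.
Arguments Fb {R m}. Arguments Pr {R m}.
Section Final.
Variable R : realType.

Lemma maxload_lt n m k (f : {ffun 'I_n -> 'I_m}) : (0 < k)%N ->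
  (maxload f < k)%N = [forall i, (load f i < k)%N].
Proof.
move=> k1; apply/idP/forallP.
  by move=> h i; apply: leq_ltn_trans h; apply: leq_bigmax.
move=> h; have : (maxload f <= k.-1)%N.
  by apply/bigmax_leqP => i _; have := h i; lia.
lia.
Qed.

Lemma prod_ind n (b : 'I_n -> bool) : \prod_(j < n) ((b j)%:R : R) = ([forall j, b j])%:R.
Proof.
case: (boolP [forall j, b j]) => h.
  by rewrite big1 // => j _; rewrite (forallP h j).
move/forallPn: h => [j hj]; rewrite (bigD1 j) //= (negbTE hj) mul0r //.
Qed.

Lemma term_le (I : finType) (P : pred I) (F : I -> R) x :
  (forall i, 0 <= F i) -> P x -> F x <= \sum_(i | P i) F i.
Proof.
move=> hF hx; rewrite (bigD1 x) //= lerDl; apply: sumr_ge0 => i _; apply: hF.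
Qed.

Lemma sum_ind m (p : 'I_m -> R) (i : 'I_m) b :
  \sum_(i' < m) p i' * (b ==> (i' == i))%:R = if b then p i else \sum_(i' < m) p i'.
Proof.
case: b.
  under eq_bigr => i' _ do rewrite implyTb mulr_natr.
  rewrite (bigD1 i) //= eqxx mulr1n big1 ?addr0 // => i' /negbTE ->.
  by rewrite mulr0n.
by apply: eq_bigr => i' _; rewrite implyFb mulr_natr mulr1n.
Qed.

Lemma union_bound n m k (p : 'I_m -> R) : (0 < k)%N -> (forall i, 0 <= p i) ->
  \sum_i p i = 1 ->
  \sum_(f : {ffun 'I_n -> 'I_m} | (k <= maxload f)%N) \prod_(j < n) p (f j)
   <= ('C(n, k))%:R * \sum_(i < m) p i ^+ k.
Proof.
move=> k1 hp hp1.
set Ind := fun (f : {ffun 'I_n -> 'I_m}) =>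
  \sum_(K : {set 'I_n} | #|K| == k) \sum_(i < m) (([forall j in K, f j == i])%:R : R).
have hInd0 : forall (f : {ffun 'I_n -> 'I_m}) (K : {set 'I_n}), 0 <= \sum_(i < m) (([forall j in K, f j == i])%:R : R).
  by move=> f K; apply: sumr_ge0 => i _; apply: ler0n.
have step1 : forall f, (k <= maxload f)%N -> 1 <= Ind f.
  move=> f hf.
  have : ~~ [forall i, (load f i < k)%N] by rewrite -maxload_lt // -leqNgt.
  move/forallPn => [i]; rewrite -leqNgt => hi.
  set A := [set j | f j == i].
  set K := [set x in take k (enum A)].
  have hK : #|K| == k.
    rewrite cardsE; move/card_uniqP: (take_uniq k (enum_uniq (mem A))) => ->.
    by rewrite size_takel // -cardE.
  have hKA : forall j, j \in K -> f j == i.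
    move=> j; rewrite inE => /mem_take; rewrite mem_enum /A inE; done.
  rewrite /Ind; apply: le_trans (@term_le _ (fun K : {set 'I_n} => #|K| == k) _ K (hInd0 f) hK).
  have h1 : (([forall j in K, f j == i])%:R : R) = 1.
    by have -> : [forall j in K, f j == i] by apply/forall_inP.
  have T := @term_le _ xpredT (fun i' : 'I_m => (([forall j in K, f j == i'])%:R : R)) i
     (fun _ => ler0n _ _) isT.
  by rewrite /= h1 in T; exact: T.
have hprod0 : forall f : {ffun 'I_n -> 'I_m}, 0 <= \prod_(j < n) p (f j).
  by move=> f; apply: prodr_ge0 => j _.
apply: (@le_trans _ _ (\sum_(f : {ffun 'I_n -> 'I_m}) \prod_(j < n) p (f j) * Ind f)).
  rewrite [X in X <= _]big_mkcond /=; apply: ler_sum => f _.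
  case: ifP => hf.
    by rewrite -[X in X <= _]mulr1; apply: ler_wpM2l => //; apply: step1.
  by apply: mulr_ge0 => //; rewrite /Ind; apply: sumr_ge0 => K _; apply: hInd0.
have inner : forall (K : {set 'I_n}) i, #|K| = k ->
   \sum_(f : {ffun 'I_n -> 'I_m}) \prod_(j < n) p (f j) * (([forall j in K, f j == i])%:R : R)
   = p i ^+ k.
  move=> K i hK.
  have E1 : forall f : {ffun 'I_n -> 'I_m}, \prod_(j < n) p (f j) * (([forall j in K, f j == i])%:R : R)
     = \prod_(j < n) (p (f j) * ((j \in K) ==> (f j == i))%:R).
    by move=> f; rewrite big_split /= prod_ind.
  under eq_bigr => f _ do rewrite E1.
  rewrite -(bigA_distr_bigA (fun (j : 'I_n) (i' : 'I_m) => p i' * ((j \in K) ==> (i' == i))%:R)).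
  have E2 : forall j : 'I_n, \sum_(i' < m) p i' * ((j \in K) ==> (i' == i))%:R =
       if j \in K then p i else 1.
    by move=> j; rewrite sum_ind hp1.
  under eq_bigr => j _ do rewrite E2.
  by rewrite -big_mkcond /= prodr_const hK.
rewrite /Ind.
under eq_bigr => f _ do rewrite mulr_sumr.
rewrite exchange_big.
rewrite (eq_bigr (fun K => \sum_(i < m) p i ^+ k)); last first.
  move=> K /eqP hK.
  under eq_bigr => f _ do rewrite mulr_sumr.
  rewrite exchange_big; apply: eq_bigr => i _; exact: inner.
rewrite (eq_bigl (fun K => K \in [set K : {set 'I_n} | #|K| == k])); last first.
  by move=> K; rewrite inE.
by rewrite sumr_const card_draws card_ord mulr_natl.
Qed.
End Final.
Theorem theorem1 (R : realType) (n m k : nat) (p : 'I_m -> R)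
  (hm : (1 <= m)%N) (hk : (1 <= k)%N)
  (hp0 : forall i, 0 <= p i) (hp1 : \sum_(i < m) p i = 1) :
  binom_tail_ge n (knorm p k) k <= prob_maxload_ge n p k /\
  prob_maxload_ge n p k <= ('C(n, k))%:R * knorm p k ^+ k.
Proof.
have hS0 : 0 <= \sum_(i < m) p i ^+ k by apply: sumr_ge0 => i _; apply: exprn_ge0.
have hkn : knorm p k ^+ k = \sum_(i < m) p i ^+ k by rewrite /knorm root_pow.
split; last by rewrite hkn; apply: union_bound.
have [c [hc0 hck hcs hle]] := @chain R k n m p hk hp0.
rewrite hp1 in hle.
have hcn : knorm p k = c by rewrite /knorm -hck pow_root.
rewrite hcn.
have total : \sum_(f : {ffun 'I_n -> 'I_m}) \prod_(j < n) p (f j) = 1.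
  rewrite -(bigA_distr_bigA (fun (j : 'I_n) (i : 'I_m) => p i)).
  by rewrite big1 // => j _; rewrite hp1.
have hsplit : \sum_(f : {ffun 'I_n -> 'I_m}) \prod_(j < n) p (f j) =
   prob_maxload_ge n p k + Fb p n (fun _ => k).
  rewrite /prob_maxload_ge /Fb (bigID (fun f : {ffun 'I_n -> 'I_m} => (k <= maxload f)%N)).
  congr (_ + _); apply: eq_bigl => f; by rewrite -maxload_lt // ltnNge.
have hF : Fb p n (fun _ => k) <= Ah k n c (1 - c).
  rewrite Fb_coef /Pr.
  apply: le_trans (ler_wpM2l (ler0n _ _) (hle n (leqnn n))) _.
  rewrite coef_EE Ah_sum.
  have -> : \sum_(j < n.+1 | (j < k)%N && (n - j < n.+1)%N) bt n j c (1 - c) =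
            \sum_(j < n.+1 | (j < k)%N) bt n j c (1 - c).
    by apply: eq_bigl => j; apply/idP/idP; lia.
  done.
have hb : binom_tail_ge n c k + Ah k n c (1 - c) = 1.
  have E := @sum_bt R n c (1 - c).
  rewrite [c + _]addrC subrK expr1n (bigID (fun j : 'I_n.+1 => (j < k)%N)) /= in E.
  have E2 : binom_tail_ge n c k = \sum_(j < n.+1 | ~~ (j < k)%N) bt n j c (1 - c).
    rewrite /binom_tail_ge big_geq_mkord; apply: eq_big => j.
      by rewrite leqNgt.
    by move=> _.
  rewrite E2 Ah_sum; lra.
lra.
Qed.
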